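(* For every order-embedding $\sigma\colon O\to O'$ between abstract posets and all causal markings $c,c'$ such that $O\rhd c$ and $O\rhd c'$ are P-markings, we have $O\rhd c\sim_{AC}O\rhd c'$ if and only if $O'\rhd\downarrow_{O'}(c\sigma)\sim_{AC}O'\rhd\downarrow_{O'}(c'\sigma)$.
   Context: Fix a set $Act$ of action labels, an infinite set $\mathcal{E}$ of event names, and a net $N=(S,T,F,l)$ (disjoint places $S$ and transitions $T$, $F\subseteq(S\times T)\cup(T\times S)$, $l\colon T\to Act$, ${}^\bullet t=\{s:(s,t)\in F\}$, $t^\bullet=\{s:(t,s)\in F\}$ nonempty). Posets are finite $Act$-labelled posets $O=(X_O,\preccurlyeq_O,l_O)$ with $X_O\subseteq\mathcal{E}$; $|O|=\{(x,l_O(x))\}$, $x_a=(x,a)$. Morphisms preserve order and labels ($\sigma(x_a)=\sigma(x)_a$); order-embeddings additionally reflect order; isomorphisms are bijective morphisms with morphism inverse. For $K\subseteq|O|$: $\max_O K$ its maximal elements; down-closed if $y\in K,x\preccurlyeq_O y\Rightarrow x\in K$; $\downarrow_O K=\{y\in|O|:\exists x\in K,\ y\preccurlyeq_O x\}$. Causal markings: finite sets $c$ of pairs $K\vdash s$ ($s\in S$, $K$ finite $\subseteq\mathcal{E}\times Act$); $\mathcal{K}(c)$ union of cause sets, $|c|$ set of places, $K\vdash m=\{K\vdash s:s\in m\}$, $c\sigma=\{\sigma(K)\vdash s\}$, $\downarrow_O c=\{\downarrow_O K\vdash s\}$. P-marking $O\rhd c$: all cause sets are down-closed subsets of $|O|$.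 $\delta(O,K,e_a)$: $O$ plus event $e\notin X_O$ labelled $a$ above all of $K$, reflexive-transitively closed. CG$_C$: $O\rhd c\cup c'\xrightarrow{K\vdash e_a}\delta(O,K,e_a)\rhd(\mathcal{K}(c)\cup\{e_a\}\vdash t^\bullet)\cup c'$ whenever $t\in T$, $O\rhd c\cup c'$ a P-marking, $|c|={}^\bullet t$, $a=l(t)$, $e\in\mathcal{E}\setminus X_O$, $K=\max_O\mathcal{K}(c)$. Fix canonical representatives $[O]_\cong$ of isomorphism classes of posets and isomorphisms $\alpha_O\colon O\to[O]_\cong$; $O$ is abstract if $[O]_\cong=O$. For abstract $O$: $\delta(O,K,a)=[\delta(O,K,e_a)]_\cong$, $new(O,K,a)$ its added event, $old(O,K,a)\colon O\to\delta(O,K,a)$ the embedding corresponding to the inclusion. CG$_{AC}$: for each CG$_C$ transition $O\rhd c\xrightarrow{K\vdash e_a}\delta(O,K,e_a)\rhd c'$, a transition $[O]_\cong\rhd c\alpha_O\stackrel{\alpha_O(K)\vdash a}{\Longrightarrow}\delta([O]_\cong,\alpha_O(K),a)\rhd c''$ where $c''$ is $c'$ renamed by $x\mapsto old([O]_\cong,\alpha_O(K),a)(\alpha_O(x))$ for $x\in X_O$ and $e_a\mapsto new([O]_\cong,\alpha_O(K),a)$. An abstract causal bisimulation is a family $\{R_O\}$ indexed by abstract posets of relations on P-markings with abstract posets such that: $(O_1\rhd c_1,O_2\rhd c_2)\in R_O$ implies $O_1=O_2=O$; and if $(O\rhd c_1,O\rhd c_2)\in R_O$ and $O\rhd c_1\stackrel{K\vdash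 a}{\Longrightarrow}O'\rhd c_1'$ then $O\rhd c_2\stackrel{K\vdash a}{\Longrightarrow}O'\rhd c_2'$ with $(O'\rhd c_1',O'\rhd c_2')\in R_{O'}$, and vice versa. $\sim_{AC}$ is the greatest one. *)

(* Defs.v *)
From HB Require Import structures.
From mathcomp Require Import all_boot.
From mathcomp Require Import finmap.
Set Implicit Arguments. Unset Strict Implicit. Unset Printing Implicit Defensive.
Local Open Scope fset_scope.

Section CausalNets.
(* E : event names, Act : action labels, S : places, T : transitions *)
Variables (E Act S T : choiceType).

(*   pev O  = |O| = {(x, l_O x) : x in X_O}   (finite set of labelled events)*)
(*   pord O = the order relation on X_O, as a finite set of pairs          *)
Record poset := Poset { pev : {fset (E * Act)} ; pord : {fset (E * E)} }.

Definition evs (O : poset) : {fset E} := [fset p.1 | p in pev O].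

Definition is_poset (O : poset) : Prop :=
  (forall x a b, (x, a) \in pev O -> (x, b) \in pev O -> a = b) /\
  (forall p, p \in pord O -> p.1 \in evs O /\ p.2 \in evs O) /\
  (forall x, x \in evs O -> (x, x) \in pord O) /\
  (forall x y, (x, y) \in pord O -> (y, x) \in pord O -> x = y) /\
  (forall x y z, (x, y) \in pord O -> (y, z) \in pord O -> (x, z) \in pord O).

Definition morphism (O O' : poset) (f : E -> E) : Prop :=
  (forall p, p \in pev O -> (f p.1, p.2) \in pev O') /\
  (forall x y, (x, y) \in pord O -> (f x, f y) \in pord O').

Definition order_embedding (O O' : poset) (f : E -> E) : Prop :=
  morphism O O' f /\
  (forall x y, x \in evs O -> y \in evs O ->
     (f x, f y) \in pord O' -> (x, y) \in pord O).

Definition isomorphism (O O' : poset) (f : E -> E) : Prop :=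
  morphism O O' f /\
  exists g, morphism O' O g /\
    (forall x, x \in evs O -> g (f x) = x) /\
    (forall y, y \in evs O' -> f (g y) = y).

Definition isomorphic (O O' : poset) : Prop := exists f, isomorphism O O' f.

Definition down (O : poset) (K : {fset (E * Act)}) : {fset (E * Act)} :=
  [fset y in pev O | has (fun k => (k \in pev O) && ((y.1, k.1) \in pord O)) K].

Definition down_closed (O : poset) (K : {fset (E * Act)}) : Prop :=
  forall x y, y \in K -> x \in pev O -> (x.1, y.1) \in pord O -> x \in K.

Definition maxO (O : poset) (K : {fset (E * Act)}) : {fset (E * Act)} :=
  [fset x in K | ~~ has (fun y => (y != x) && ((x.1, y.1) \in pord O)) K].

Definition renK (f : E -> E) (K : {fset (E * Act)}) : {fset (E * Act)} :=
  [fset (f p.1, p.2) | p in K].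

Definition delta (O : poset) (K : {fset (E * Act)}) (e : E) (a : Act) : poset :=
  Poset (pev O `|` [fset (e, a)])
        (pord O `|` [fset (y.1, e) | y in down O K] `|` [fset (e, e)]).

(* causal markings: finite sets of pairs K |- s                             *)
Definition marking := {fset ({fset (E * Act)} * S)}.

Definition causes (c : marking) : {fset (E * Act)} := \bigcup_(p <- c) p.1.
Definition places (c : marking) : {fset S} := [fset p.2 | p in c].
Definition renM (f : E -> E) (c : marking) : marking :=
  [fset (renK f p.1, p.2) | p in c].
Definition downM (O : poset) (c : marking) : marking :=
  [fset (down O p.1, p.2) | p in c].

Definition Pmarking (O : poset) (c : marking) : Prop :=
  is_poset O /\
  forall p, p \in c -> fsubset p.1 (pev O) /\ down_closed O p.1.

(* The net N = (S, T, F, l): F splits into Fin (subset of S x T) and        *)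
(* Fout (subset of T x S).                                                  *)
Variables (Fin : S -> T -> Prop) (Fout : T -> S -> Prop) (l : T -> Act).

Definition stepC (O : poset) (M : marking) (K : {fset (E * Act)}) (e : E)
    (a : Act) (O2 : poset) (M2 : marking) : Prop :=
  exists (t : T) (c c1 : marking) (m : {fset S}),
    Pmarking O M /\ M = c `|` c1 /\
    (forall s, s \in places c <-> Fin s t) /\
    (forall s, s \in m <-> Fout t s) /\
    a = l t /\ e \notin evs O /\ K = maxO O (causes c) /\
    O2 = delta O K e a /\
    M2 = [fset (causes c `|` [fset (e, a)], s) | s in m] `|` c1.

(* canonical representatives [O] and isomorphisms alpha_O : O -> [O] *)
Variables (rep : poset -> poset) (alpha : poset -> E -> E).
(* the fixed choice of a fresh event used to define delta(O,K,a), new, old *)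
Variable (fresh : {fset E} -> E).

Definition canonical_reps : Prop :=
  (forall O, is_poset O -> is_poset (rep O) /\ isomorphism O (rep O) (alpha O)) /\
  (forall O O', is_poset O -> is_poset O' -> isomorphic O O' -> rep O = rep O').

Definition fresh_spec : Prop := forall X, fresh X \notin X.

Definition is_abstract (O : poset) : Prop := rep O = O.

Definition deltaE (O : poset) (K : {fset (E * Act)}) (a : Act) : poset :=
  delta O K (fresh (evs O)) a.
Definition deltaA (O : poset) (K : {fset (E * Act)}) (a : Act) : poset :=
  rep (deltaE O K a).
Definition newA (O : poset) (K : {fset (E * Act)}) (a : Act) : E :=
  alpha (deltaE O K a) (fresh (evs O)).
Definition oldA (O : poset) (K : {fset (E * Act)}) (a : Act) : E -> E :=
  alpha (deltaE O K a).

Definition stepAC (O : poset) (M : marking) (K : {fset (E * Act)}) (a : Act)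
    (O2 : poset) (M2 : marking) : Prop :=
  exists (O0 : poset) (M0 : marking) (K0 : {fset (E * Act)}) (e : E)
         (O0' : poset) (M0' : marking),
    stepC O0 M0 K0 e a O0' M0' /\
    O = rep O0 /\ M = renM (alpha O0) M0 /\ K = renK (alpha O0) K0 /\
    O2 = deltaA O K a /\
    M2 = renM (fun x => if x == e then newA O K a
                        else oldA O K a (alpha O0 x)) M0'.

(* abstract causal bisimulations: families R_O indexed by abstract posets *)
Definition ACbisim
    (R : poset -> poset * marking -> poset * marking -> Prop) : Prop :=
  forall O P1 P2, R O P1 P2 ->
    is_abstract O /\ P1.1 = O /\ P2.1 = O /\
    Pmarking O P1.2 /\ Pmarking O P2.2 /\
    (forall K a O' c1', stepAC O P1.2 K a O' c1' ->
       exists c2', stepAC O P2.2 K a O' c2' /\ R O' (O', c1') (O', c2')) /\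
    (forall K a O' c2', stepAC O P2.2 K a O' c2' ->
       exists c1', stepAC O P1.2 K a O' c1' /\ R O' (O', c1') (O', c2')).

Definition simAC (O : poset) (c1 c2 : marking) : Prop :=
  exists R, ACbisim R /\ R O (O, c1) (O, c2).

End CausalNets.

(* Main.v *)
Require Import Defs.
From HB Require Import structures.
From mathcomp Require Import all_boot finmap.
Set Implicit Arguments. Unset Strict Implicit. Unset Printing Implicit Defensive.
Local Open Scope fset_scope.
Section P.
Set Default Proof Using "All".
Variables (E Act S T : choiceType).
Implicit Types (O P Q : poset E Act) (K : {fset E * Act}) (c : marking E Act S).

Lemma in_down O K y : (y \in down O K) =
  (y \in pev O) && has (fun k => (k \in pev O) && ((y.1, k.1) \in pord O)) K.
Proof. by rewrite !inE. Qed.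

Lemma in_downP O K y : y \in down O K <->
  y \in pev O /\ exists2 k, k \in K & (k \in pev O) /\ ((y.1, k.1) \in pord O).
Proof.
rewrite in_down; split.
  by case/andP=> -> /hasP [k kK /andP[? ?]]; split => //; exists k.
by case=> -> [k kK [? ?]]; apply/hasP; exists k => //; apply/andP.
Qed.

Lemma in_maxOP O K y : y \in maxO O K <->
  y \in K /\ (forall z, z \in K -> z != y -> (y.1, z.1) \notin pord O).
Proof.
rewrite !inE /=; split.
  case/andP=> -> /hasPn H; split => // z /H; rewrite negb_and.
  by case/orP=> [/negPn -> //| ->].
case=> -> H; apply/hasPn => z zK; rewrite negb_and.
by case: (eqVneq z y) => //= /(H z zK).
Qed.

Lemma in_renKP (f : E -> E) K x : x \in renK f K <-> exists2 p, p \in K & x = (f p.1, p.2).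
Proof. by split; [case/imfsetP => p pK ->; exists p | case=> p pK ->; apply/imfsetP; exists p]. Qed.

Lemma renK_in (f : E -> E) K p : p \in K -> (f p.1, p.2) \in renK f K.
Proof. by move=> pK; apply/in_renKP; exists p. Qed.

Lemma renKU (f : E -> E) (A B : {fset E * Act}) : renK f (A `|` B) = renK f A `|` renK f B.
Proof. exact: imfsetU. Qed.

Lemma renK1 (f : E -> E) (p : E * Act) : renK f [fset p] = [fset (f p.1, p.2)].
Proof. exact: imfset_fset1. Qed.

Lemma renK_comp (f g : E -> E) K : renK f (renK g K) = renK (f \o g) K.
Proof. by rewrite /renK -imfset_comp. Qed.

Lemma eq_in_renK (f g : E -> E) K : (forall p, p \in K -> f p.1 = g p.1) -> renK f K = renK g K.
Proof. by move=> H; apply: eq_in_imfset => p pK; rewrite /= H. Qed.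

Lemma renK_id K : renK id K = K.
Proof.
apply/fsetP => x; apply/idP/idP => [/in_renKP [p pK ->]|xK]; first by case: p pK.
by apply/in_renKP; exists x => //; case: x xK.
Qed.

Lemma in_causesP c x : x \in causes c <-> exists2 p, p \in c & x \in p.1.
Proof.
rewrite /causes; split.
  by case/bigfcupP => p /andP[pc _] xp; exists p.
by case=> p pc xp; apply/bigfcupP; exists p => //; rewrite pc.
Qed.

Lemma in_renMP (f : E -> E) c x : x \in renM f c <-> exists2 p, p \in c & x = (renK f p.1, p.2).
Proof. by split; [case/imfsetP => p pK ->; exists p | case=> p pK ->; apply/imfsetP; exists p]. Qed.

Lemma in_downMP O c x : x \in downM O c <-> exists2 p, p \in c & x = (down O p.1, p.2).
Proof. by split; [case/imfsetP => p pK ->; exists p | case=> p pK ->; apply/imfsetP; exists p]. Qed.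

Lemma renMU (f : E -> E) (A B : marking E Act S) : renM f (A `|` B) = renM f A `|` renM f B.
Proof. exact: imfsetU. Qed.

Lemma downMU O (A B : marking E Act S) : downM O (A `|` B) = downM O A `|` downM O B.
Proof. exact: imfsetU. Qed.

Lemma renM_comp (f g : E -> E) c : renM f (renM g c) = renM (f \o g) c.
Proof.
rewrite /renM -imfset_comp; apply: eq_imfset => // p /=.
by rewrite renK_comp.
Qed.

Lemma causes_renM (f : E -> E) c : causes (renM f c) = renK f (causes c).
Proof.
apply/fsetP => x; apply/idP/idP.
  case/in_causesP => q /in_renMP [p pc ->] /= /in_renKP [y yp ->].
  by apply: renK_in; apply/in_causesP; exists p.
case/in_renKP => y /in_causesP [p pc yp] ->; apply/in_causesP.
by exists (renK f p.1, p.2); [apply/in_renMP; exists p | apply: renK_in].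
Qed.

Lemma places_renM (f : E -> E) c : places (renM f c) = places c.
Proof. by rewrite /places /renM -imfset_comp. Qed.

Lemma places_downM O c : places (downM O c) = places c.
Proof. by rewrite /places /downM -imfset_comp. Qed.


Lemma evsP O x : x \in evs O <-> exists b, (x, b) \in pev O.
Proof.
split; first by case/imfsetP => -[y b] /= yb ->; exists b.
by case=> b xb; apply/imfsetP; exists (x, b).
Qed.

Lemma pev_evs O p : p \in pev O -> p.1 \in evs O.
Proof. by case: p => x b xb; apply/evsP; exists b. Qed.

Section PosetFacts.
Variables (O : poset E Act) (HO : is_poset O).

Lemma pair_uniq p q : p \in pev O -> q \in pev O -> p.1 = q.1 -> p = q.
Proof.
case: HO => H _; case: p q => x a [y b] /= xa yb exy; subst y.
by rewrite (H x a b).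
Qed.

Lemma ord1 x y : (x, y) \in pord O -> x \in evs O.
Proof. by case: HO => _ [H _] /H []. Qed.
Lemma ord2 x y : (x, y) \in pord O -> y \in evs O.
Proof. by case: HO => _ [H _] /H []. Qed.
Lemma ord_refl x : x \in evs O -> (x, x) \in pord O.
Proof. by case: HO => _ [_ [H _]] /H. Qed.
Lemma ord_anti x y : (x, y) \in pord O -> (y, x) \in pord O -> x = y.
Proof. by case: HO => _ [_ [_ [H _]]] /H H1 /H1. Qed.
Lemma ord_trans x y z : (x, y) \in pord O -> (y, z) \in pord O -> (x, z) \in pord O.
Proof. by case: HO => _ [_ [_ [_ H]]]; apply: H. Qed.

Lemma down_closed_down K : down_closed O (down O K).
Proof.
move=> x y /in_downP [_ [k kK [kO yk]]] xO xy; apply/in_downP; split => //.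
by exists k => //; split => //; apply: ord_trans yk.
Qed.

Lemma sub_down K p : K `<=` pev O -> p \in K -> p \in down O K.
Proof.
move=> /fsubsetP sK pK; apply/in_downP; split; first exact: sK.
by exists p => //; split; [exact: sK | apply: ord_refl; apply: pev_evs; apply: sK].
Qed.

Lemma down_id K : K `<=` pev O -> down_closed O K -> down O K = K.
Proof.
move=> sK dK; apply/fsetP => p; apply/idP/idP; last exact: sub_down.
by case/in_downP => pO [k kK [_ pk]]; apply: (dK p k).
Qed.

Lemma down_down K : down O (down O K) = down O K.
Proof. by apply: down_id; [apply/fsubsetP => p /in_downP [] | exact: down_closed_down]. Qed.

Lemma PmarkingE c : Pmarking O c <-> forall p, p \in c -> down O p.1 = p.1.
Proof.
split; first by case=> _ H p /H [s d]; apply: down_id.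
move=> H; split => // p /H <-; split; last exact: down_closed_down.
by apply/fsubsetP => q /in_downP [].
Qed.

Lemma down_causes c : Pmarking O c -> down O (causes c) = causes c.
Proof.
move/PmarkingE => H; apply/fsetP => y; apply/idP/idP.
  case/in_downP => yO [k /in_causesP [p pc kp] [kO yk]].
  apply/in_causesP; exists p => //; rewrite -(H p pc); apply/in_downP; split => //.
  by exists k.
move=> yc; apply: sub_down => //; apply/fsubsetP => q /in_causesP [p pc].
by rewrite -(H p pc) => /in_downP [].
Qed.

End PosetFacts.

Lemma down_sub O K : down O K `<=` pev O.
Proof. by apply/fsubsetP => q /in_downP []. Qed.

Lemma downU O (A B : {fset E * Act}) : down O (A `|` B) = down O A `|` down O B.
Proof.
apply/fsetP => y; rewrite in_fsetU; apply/idP/orP.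
  case/in_downP => yO [k /fsetUP [kA|kB] H]; [left|right]; apply/in_downP; split => //; by exists k.
by case=> /in_downP [yO [k kX H]]; apply/in_downP; split => //; exists k => //; rewrite in_fsetU kX ?orbT.
Qed.

Lemma down_mono O (A B : {fset E * Act}) : A `<=` B -> down O A `<=` down O B.
Proof.
move/fsubsetP => sAB; apply/fsubsetP => y /in_downP [yO [k kA H]].
by apply/in_downP; split => //; exists k => //; apply: sAB.
Qed.

Lemma renK_mono (f : E -> E) (A B : {fset E * Act}) : A `<=` B -> renK f A `<=` renK f B.
Proof. by move/fsubsetP => sAB; apply/fsubsetP => y /in_renKP [p /sAB pB ->]; apply: renK_in. Qed.

Lemma maxO_sub O (A : {fset E * Act}) : maxO O A `<=` A.
Proof. by apply/fsubsetP => y /in_maxOP []. Qed.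

Lemma pev_delta_sub O K e a : pev O `<=` pev (delta O K e a).
Proof. exact: fsubsetUl. Qed.

Lemma causes_downM O c : causes (downM O c) = down O (causes c).
Proof.
apply/fsetP => y; apply/idP/idP.
  case/in_causesP => q /in_downMP [p pc ->] /= /in_downP [yO [k kp H]].
  by apply/in_downP; split => //; exists k => //; apply/in_causesP; exists p.
case/in_downP => yO [k /in_causesP [p pc kp] H]; apply/in_causesP.
exists (down O p.1, p.2); first by apply/in_downMP; exists p.
by apply/in_downP; split => //; exists k.
Qed.


Lemma emb_comp (A B C : poset E Act) f g :
  order_embedding A B f -> order_embedding B C g -> order_embedding A C (g \o f).
Proof.
case=> [[f1 f2] f3] [[g1 g2] g3]; split; first split.
- by move=> p /f1 /g1.
- by move=> x y /f2 /g2.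
move=> x y xA yA /= H; apply: f3 => //; apply: g3 => //.
  by case/evsP: xA => b /f1 /pev_evs.
by case/evsP: yA => b /f1 /pev_evs.
Qed.

Section Emb.
Variables (P Q : poset E Act) (tau : E -> E).
Hypotheses (HP : is_poset P) (HQ : is_poset Q) (Ht : order_embedding P Q tau).

Lemma emb_pev p : p \in pev P -> (tau p.1, p.2) \in pev Q.
Proof. by case: Ht => [[H _] _] /H. Qed.
Lemma emb_ord x y : (x, y) \in pord P -> (tau x, tau y) \in pord Q.
Proof. by case: Ht => [[_ H] _] /H. Qed.
Lemma emb_refl x y : x \in evs P -> y \in evs P -> (tau x, tau y) \in pord Q -> (x, y) \in pord P.
Proof. by case: Ht => _ H; apply: H. Qed.
Lemma emb_evs x : x \in evs P -> tau x \in evs Q.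
Proof. by case/evsP => b /emb_pev /pev_evs. Qed.
Lemma emb_inj x y : x \in evs P -> y \in evs P -> tau x = tau y -> x = y.
Proof.
move=> xP yP e; have r : (tau x, tau y) \in pord Q by rewrite e; apply: ord_refl; rewrite // -e; apply: emb_evs.
have r' : (tau y, tau x) \in pord Q by rewrite e; apply: ord_refl; rewrite // -e; apply: emb_evs.
by apply: (ord_anti HP); apply: emb_refl.
Qed.
Lemma emb_pinj p q : p \in pev P -> q \in pev P -> (tau p.1, p.2) = (tau q.1, q.2) -> p = q.
Proof.
case: p q => x a [y b] xa yb [/emb_inj e ->]; rewrite (e (pev_evs xa) (pev_evs yb)) //.
Qed.
Lemma renK_emb_sub A : A `<=` pev P -> renK tau A `<=` pev Q.
Proof. by move/fsubsetP => sA; apply/fsubsetP => q /in_renKP [p /sA pA ->]; apply: emb_pev. Qed.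
Lemma in_renK_emb A p : A `<=` pev P -> p \in pev P -> ((tau p.1, p.2) \in renK tau A) = (p \in A).
Proof.
move/fsubsetP => sA pP; apply/idP/idP; last exact: renK_in.
by case/in_renKP => q qA e; rewrite (emb_pinj pP (sA q qA) e).
Qed.
Lemma renK_emb_inj A B : A `<=` pev P -> B `<=` pev P -> renK tau A = renK tau B -> A = B.
Proof.
move=> sA sB e; apply/fsetP => p; apply/idP/idP => pX.
  by rewrite -(in_renK_emb sB); [rewrite -e; apply: renK_in | move/fsubsetP: sA; apply].
by rewrite -(in_renK_emb sA); [rewrite e; apply: renK_in | move/fsubsetP: sB; apply].
Qed.
Lemma down_emb A p : A `<=` pev P -> p \in pev P ->
  ((tau p.1, p.2) \in down Q (renK tau A)) = (p \in down P A).
Proof.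
move/fsubsetP => sA pP; apply/idP/idP.
  case/in_downP => _ [k /in_renKP [q qA ->] [_ H]]; apply/in_downP; split => //.
  exists q => //; split; first exact: sA.
  by apply: emb_refl => //; apply: pev_evs => //; apply: sA.
case/in_downP => _ [k kA [kP H]]; apply/in_downP; split; first exact: emb_pev.
by exists (tau k.1, k.2); [apply: renK_in | split; [apply: emb_pev | apply: emb_ord]].
Qed.
Lemma maxO_emb C : C `<=` pev P -> maxO Q (down Q (renK tau C)) = renK tau (maxO P C).
Proof.
move=> sC; have sC' := fsubsetP sC.
apply/fsetP => y; apply/idP/idP.
  case/in_maxOP => /[dup] yd /in_downP [yQ [k /in_renKP [q qC ->] [kQ yk]]] Hm.
  have ey : y = (tau q.1, q.2).
    have kd : (tau q.1, q.2) \in down Q (renK tau C).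
      by rewrite down_emb //; [apply: sub_down | exact: sC'].
    by case: (eqVneq (tau q.1, q.2) y) => // ne; move: (Hm _ kd ne); rewrite yk.
  rewrite ey; apply: renK_in; apply/in_maxOP; split => // z zC nz.
  apply/negP => qz.
  have zd : (tau z.1, z.2) \in down Q (renK tau C).
    by rewrite down_emb //; [apply: sub_down | exact: sC'].
  have nz' : (tau z.1, z.2) != y.
    rewrite ey; apply/negP => /eqP e; move/eqP: nz; apply; exact: (emb_pinj (sC' _ zC) (sC' _ qC) e).
  by move: (Hm _ zd nz'); rewrite ey /= emb_ord.
case/in_renKP => q /in_maxOP [qC Hm] ->; apply/in_maxOP; split.
  by rewrite down_emb //; [apply: sub_down | apply: sC'].
move=> z /in_downP [zQ [k /in_renKP [r rC ->] [kQ zk]]] nz; apply/negP => qz.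
have qr : (q.1, r.1) \in pord P.
  apply: emb_refl; try (apply: pev_evs; apply: sC' => //).
  exact: ord_trans qz zk.
have eqr : r = q by case: (eqVneq r q) => // /(Hm _ rC); rewrite qr.
subst r; move/eqP: nz; apply; apply: (pair_uniq HQ zQ (emb_pev (sC' _ qC))).
exact: (ord_anti HQ zk qz).
Qed.
End Emb.

Section Iso.
Variables (O O' : poset E Act) (f g : E -> E).
Hypotheses (HO : is_poset O) (HO' : is_poset O') (Hf : morphism O O' f) (Hg : morphism O' O g)
  (gf : forall x, x \in evs O -> g (f x) = x) (fg : forall y, y \in evs O' -> f (g y) = y).

Lemma iso_emb : order_embedding O O' f.
Proof.
split => // x y xO yO /(proj2 Hg); rewrite !gf //.
Qed.
Lemma iso_emb' : order_embedding O' O g.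
Proof.
split => // x y xO yO /(proj2 Hf); rewrite !fg //.
Qed.
Lemma iso_surj q : q \in pev O' -> exists2 p, p \in pev O & q = (f p.1, p.2).
Proof.
move=> qO; exists (g q.1, q.2); first exact: (proj1 Hg).
by rewrite /= fg //; [case: q qO | apply: pev_evs].
Qed.
Lemma iso_down A : A `<=` pev O -> down O' (renK f A) = renK f (down O A).
Proof.
move=> sA; apply/fsetP => q; apply/idP/idP.
  move=> qd; have: q \in pev O' by move/fsubsetP: (down_sub O' (renK f A)); apply.
  case/iso_surj => p pO eq; subst q; move: qd; rewrite (down_emb HO HO' iso_emb) // => pd.
  exact: renK_in.
case/in_renKP => p pd ->; rewrite (down_emb HO HO' iso_emb) //.
by move/fsubsetP: (down_sub O A); apply.
Qed.
Lemma iso_renK_inv A : A `<=` pev O' -> renK f (renK g A) = A.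
Proof.
move/fsubsetP => sA; rewrite renK_comp -[RHS]renK_id; apply: eq_in_renK => p pA /=.
by rewrite fg //; apply: pev_evs; apply: sA.
Qed.
Lemma iso_Pmarking c : Pmarking O c -> Pmarking O' (renM f c).
Proof.
move=> Hc; have /PmarkingE H := Hc; apply/(PmarkingE HO') => q /in_renMP [p pc ->] /=.
rewrite iso_down ?H //; case: Hc => _ /(_ p pc) []//.
Qed.
Lemma iso_maxO C : C `<=` pev O -> down_closed O C -> maxO O' (renK f C) = renK f (maxO O C).
Proof.
move=> sC dC; rewrite -(maxO_emb HO HO' iso_emb) // iso_down // down_id //.
Qed.
End Iso.

Section Delta.
Variables (O : poset E Act) (K : {fset E * Act}) (e : E) (a : Act).
Hypotheses (HO : is_poset O) (He : e \notin evs O).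
Local Notation D := (delta O K e a).

Lemma in_pev_delta p : (p \in pev D) = (p \in pev O) || (p == (e, a)).
Proof using S T. by rewrite /= in_fsetU in_fset1. Qed.

Lemma in_pord_delta x y : (x, y) \in pord D <->
  (x, y) \in pord O \/ (y = e /\ exists2 z, z \in down O K & z.1 = x) \/ (x = e /\ y = e).
Proof using S T.
rewrite /= !in_fsetU in_fset1; split.
  case/orP => [/orP [H|/imfsetP [z zd [-> ->]]]|/eqP [-> ->]].
  - by left.
  - by right; left; split => //; exists z.
  - by right; right.
case=> [->//|[[-> [z zd <-]]|[-> ->]]]; last by rewrite eqxx !orbT.
by rewrite (in_imfset _ (fun y => (y.1, e)) zd) orbT.
Qed.

Lemma e_notin_ord1 y : (e, y) \in pord O -> False.
Proof. by move/ord1 => /(_ HO); rewrite (negbTE He). Qed.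
Lemma e_notin_ord2 y : (y, e) \in pord O -> False.
Proof. by move/ord2 => /(_ HO); rewrite (negbTE He). Qed.

Lemma evs_delta x : x \in evs D <-> x \in evs O \/ x = e.
Proof using S T.
split.
  case/evsP => b; rewrite in_pev_delta => /orP [xb|/eqP [-> _]]; last by right.
  by left; apply/evsP; exists b.
case=> [/evsP [b xb]|->]; apply/evsP; [exists b | exists a]; rewrite in_pev_delta ?xb //.
by rewrite eqxx orbT.
Qed.

Lemma eO p : p \in pev O -> p.1 <> e.
Proof. by move=> /pev_evs pO pe; move: He; rewrite -pe pO. Qed.

Lemma delta_lab x b1 b2 : (x, b1) \in pev D -> (x, b2) \in pev D -> b1 = b2.
Proof.
rewrite !in_pev_delta => /orP [h1|/eqP [ex eb1]] /orP [h2|/eqP [ex' eb2]].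
- by case: HO => H _; apply: (H x).
- by case: (eO h1).
- by case: (eO h2).
- by subst.
Qed.

Lemma delta_ordevs p : p \in pord D -> p.1 \in evs D /\ p.2 \in evs D.
Proof.
case: p => x y /in_pord_delta [H|[[-> [z zd <-]]|[-> ->]]]; rewrite !evs_delta.
- by split; left; [apply: (ord1 HO H) | apply: (ord2 HO H)].
- split; last by right.
  by left; apply: pev_evs; move/fsubsetP: (down_sub O K); apply.
- by split; right.
Qed.

Lemma delta_refl x : x \in evs D -> (x, x) \in pord D.
Proof.
move=> /evs_delta [xO|->]; apply/in_pord_delta; [left; exact: (ord_refl HO) | by right; right].
Qed.

Lemma delta_anti x y : (x, y) \in pord D -> (y, x) \in pord D -> x = y.
Proof.
move=> /in_pord_delta [H1|[[ye [z zd zx]]|[xe ye]]] /in_pord_delta [H2|[[xe2 [z' zd' z'y]]|[ye2 xe2']]].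
all: try subst x; try subst y; try done; try (exact: (ord_anti HO H1 H2)).
all: first [ by case: (e_notin_ord1 H1) | by case: (e_notin_ord2 H1)
           | by case: (e_notin_ord1 H2) | by case: (e_notin_ord2 H2) ].
Qed.

Lemma delta_trans x y w : (x, y) \in pord D -> (y, w) \in pord D -> (x, w) \in pord D.
Proof.
move=> /in_pord_delta [H1|[[ye [z zd zx]]|[xe ye]]] /in_pord_delta [H2|[[we [z' zd' z'y]]|[ye2 we2]]].
all: try subst x; try subst y; try subst w; try (by case: (e_notin_ord1 H1)); try (by case: (e_notin_ord2 H1));
     try (by case: (e_notin_ord1 H2)); try (by case: (e_notin_ord2 H2)).
all: apply/in_pord_delta.
all: first [ by left; apply: (ord_trans HO H1 H2) | by right; right
           | by right; left; split => //; exists z | by right; left; split => //; exists z' | idtac ].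
right; left; split => //.
move: zd'; rewrite in_down => /andP [z'O /hasP [k kK /andP [kO z'k]]].
have xO : x \in evs O by apply: (ord1 HO H1).
case/evsP: xO => b xb; exists (x, b) => //; apply/in_downP; split => //; exists k => //; split => //.
exact: (ord_trans HO H1).
Qed.

Lemma delta_poset : is_poset D.
Proof.
split; first exact: delta_lab.
split; first exact: delta_ordevs.
split; first exact: delta_refl.
split; first exact: delta_anti.
exact: delta_trans.
Qed.

Lemma down_delta_old X : X `<=` pev O -> down D X = down O X.
Proof.
move/fsubsetP => sX; apply/fsetP => y; apply/idP/idP.
  case/in_downP => yD [k kX [kD /in_pord_delta [H|[[ke _]|[_ ke]]]]].
  - apply/in_downP; split; last by exists k => //; split => //; apply: sX.
    move: yD; rewrite in_pev_delta => /orP [//|/eqP ye].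
    by move: H; rewrite ye => /e_notin_ord1.
  - by have := pev_evs (sX _ kX); rewrite ke (negbTE He).
  - by have := pev_evs (sX _ kX); rewrite ke (negbTE He).
case/in_downP => yO [k kX [kO H]]; apply/in_downP; split; first by rewrite in_pev_delta yO.
by exists k => //; split; [rewrite in_pev_delta kO | apply/in_pord_delta; left].
Qed.

Lemma down_delta_new : down D [fset (e, a)] = down O K `|` [fset (e, a)].
Proof.
apply/fsetP => y; rewrite in_fsetU in_fset1; apply/idP/idP.
  case/in_downP => yD [k]; rewrite in_fset1 => /eqP -> [_ /in_pord_delta [H|[[_ [z zd zy]]|[ye _]]]].
  - by case: (e_notin_ord2 H).
  - move: yD; rewrite in_pev_delta => /orP [yO|->]; last by rewrite orbT.
    have zO : z \in pev O by move/fsubsetP: (down_sub O K); apply.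
    by rewrite (pair_uniq HO yO zO (esym zy)) zd.
  - move: yD; rewrite in_pev_delta => /orP [yO|->]; last by rewrite orbT.
    by move: He; rewrite -ye (pev_evs yO).
case/orP => [yd|/eqP ->].
  have yO : y \in pev O by move/fsubsetP: (down_sub O K); apply.
  apply/in_downP; split; first by rewrite in_pev_delta yO.
  exists (e, a); first by rewrite in_fset1.
  split; first by rewrite in_pev_delta eqxx orbT.
  by apply/in_pord_delta; right; left; split => //; exists y.
apply/in_downP; split; first by rewrite in_pev_delta eqxx orbT.
exists (e, a); first by rewrite in_fset1.
by split; [rewrite in_pev_delta eqxx orbT | apply/in_pord_delta; right; right].
Qed.

End Delta.

Lemma Pmark_tok O c p q : Pmarking O c -> p \in c -> q \in p.1 -> q \in pev O.
Proof. by case=> _ H /H [/fsubsetP sp _] /sp. Qed.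
Lemma Pmark_causes O c q : Pmarking O c -> q \in causes c -> q \in pev O.
Proof. by move=> H /in_causesP [p pc qp]; apply: Pmark_tok H pc qp. Qed.
Lemma Pmark_causes_sub O c : Pmarking O c -> causes c `<=` pev O.
Proof. by move=> H; apply/fsubsetP => q; apply: Pmark_causes. Qed.
Lemma PmarkU O (A B : marking E Act S) : Pmarking O (A `|` B) -> Pmarking O A /\ Pmarking O B.
Proof. by case=> HO H; split; split => // p pX; apply: H; rewrite in_fsetU pX ?orbT. Qed.
Lemma PmarkU' O (A B : marking E Act S) : Pmarking O A -> Pmarking O B -> Pmarking O (A `|` B).
Proof. by case=> HO H1 [_ H2]; split => // p /fsetUP [/H1|/H2]. Qed.
Lemma causes_dc O c : Pmarking O c -> down_closed O (causes c).
Proof. by move=> H; have := @down_closed_down _ H.1 (causes c); rewrite (down_causes H.1 H). Qed.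

Lemma renM_id c : renM id c = c.
Proof.
apply/fsetP => x; apply/idP/idP => [/in_renMP [p pc ->]|xc]; first by rewrite renK_id; case: p pc.
by apply/in_renMP; exists x => //; rewrite renK_id; case: x xc.
Qed.

Lemma renM_inv O (f g : E -> E) c : Pmarking O c -> (forall y, y \in evs O -> f (g y) = y) ->
  renM f (renM g c) = c.
Proof.
move=> Hc fg; rewrite renM_comp -[RHS]renM_id; apply: eq_in_imfset => p pc /=.
congr (_, _); apply: eq_in_renK => q qp /=.
by rewrite fg //; apply: pev_evs; apply: Pmark_tok Hc pc qp.
Qed.

Lemma renM_step O0 (f o : E -> E) (n e : E) (a : Act) (c0 c10 : marking E Act S) (m : {fset S}) :
  e \notin evs O0 -> Pmarking O0 (c0 `|` c10) ->
  renM (fun x => if x == e then n else o (f x))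
    ([fset (causes c0 `|` [fset (e, a)], s) | s in m] `|` c10)
  = [fset (renK o (causes (renM f c0)) `|` [fset (n, a)], s) | s in m] `|` renM o (renM f c10).
Proof.
move=> He /PmarkU [H0 H1]; have ne : forall q, q \in pev O0 -> q.1 != e.
  by move=> q /pev_evs qO; apply/eqP => qe; move: He; rewrite -qe qO.
rewrite renMU; congr (_ `|` _).
  rewrite /renM -imfset_comp; apply: eq_imfset => // s' /=.
  rewrite renKU renK1 /= eqxx causes_renM renK_comp; congr ((_ `|` _), _).
  by apply: eq_in_renK => q /(Pmark_causes H0) /ne /negbTE /= ->.
rewrite !renM_comp; apply: eq_in_imfset => p pc /=; congr (_, _).
by apply: eq_in_renK => q /(Pmark_tok H1 pc) /ne /negbTE /= ->.
Qed.

Section Net.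
Variables (Fin : S -> T -> Prop) (Fout : T -> S -> Prop) (l : T -> Act)
  (rep : poset E Act -> poset E Act) (alpha : poset E Act -> E -> E) (fresh : {fset E} -> E).
Hypotheses (Hrep : canonical_reps rep alpha) (Hfresh : fresh_spec fresh).

Local Notation oA := (oldA alpha fresh).
Local Notation nA := (newA alpha fresh).
Local Notation dA := (deltaA rep fresh).
Local Notation dE := (deltaE fresh).

Lemma rep_iso O : is_poset O -> is_poset (rep O) /\ exists g,
  [/\ morphism O (rep O) (alpha O), morphism (rep O) O g,
      (forall x, x \in evs O -> g (alpha O x) = x) & (forall y, y \in evs (rep O) -> alpha O (g y) = y)].
Proof.
move=> HO; case: (proj1 Hrep O HO) => H1 [H2 [g [H3 [H4 H5]]]]; split => //.
by exists g.
Qed.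

Lemma rep_idem O : is_poset O -> rep (rep O) = rep O.
Proof.
move=> HO; have [H1 [g [m1 m2 gf fg]]] := rep_iso HO.
apply: (proj2 Hrep) => //; exists g; split => //; exists (alpha O); split => //.
Qed.

Lemma dE_poset O K a : is_poset O -> is_poset (dE O K a).
Proof. by move=> HO; apply: delta_poset => //; apply: Hfresh. Qed.
Lemma dA_poset O K a : is_poset O -> is_poset (dA O K a).
Proof. by move=> HO; exact: (proj1 (rep_iso (dE_poset K a HO))). Qed.
Lemma dA_abs O K a : is_poset O -> rep (dA O K a) = dA O K a.
Proof. by move=> HO; apply: rep_idem; apply: dE_poset. Qed.

Definition stepN O (M : marking E Act S) (K : {fset E * Act}) (a : Act) O2 (M2 : marking E Act S) :=
  exists (t : T) (c c1 : marking E Act S) (m : {fset S}),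
  [/\ M = c `|` c1, (forall s, s \in places c <-> Fin s t), (forall s, s \in m <-> Fout t s),
      a = l t & K = maxO O (causes c)] /\
      O2 = dA O K a /\
      M2 = [fset (renK (oA O K a) (causes c) `|` [fset (nA O K a, a)], s) | s in m]
           `|` renM (oA O K a) c1.

Lemma stepAC_N O M K a O2 M2 : stepAC Fin Fout l rep alpha fresh O M K a O2 M2 -> stepN O M K a O2 M2.
Proof.
case=> O0 [M0 [K0 [e [O0' [M0' [HC [HO [HM' [HK' [HO2 HM2]]]]]]]]]].
case: HC => t [c0 [c10 [m [HPm [HM [Hpl [Hm [Ha [He [HK [HO0' HM0']]]]]]]]]]].
have HO0 := HPm.1.
have [HR [g [m1 m2 gf fg]]] := rep_iso HO0.
subst M0.
have [Hc0 Hc10] := PmarkU HPm.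
exists t, (renM (alpha O0) c0), (renM (alpha O0) c10), m; split; first split => //.
- by rewrite HM' renMU.
- by move=> s; rewrite places_renM.
- rewrite HK' HK causes_renM HO -(iso_maxO HO0 HR m1 m2 gf fg) //.
    exact: Pmark_causes_sub.
  exact: causes_dc.
split => //; rewrite HM2 HM0'; exact: (renM_step _ _ _ _ _ He HPm).
Qed.

Lemma stepN_AC O M K a O2 M2 : is_poset O -> rep O = O -> Pmarking O M ->
  stepN O M K a O2 M2 -> stepAC Fin Fout l rep alpha fresh O M K a O2 M2.
Proof.
move=> HO Hab HM [t [c [c1 [m [[HMe Hpl Hm Ha HK] [HO2 HM2]]]]]].
have [HR [g [m1 m2 gf fg]]] := rep_iso HO.
rewrite Hab in HR m1 m2 fg.
set f := alpha O in m1 m2 gf fg *.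
have HgM : Pmarking O (renM g M) by apply: (iso_Pmarking HO HO m2 m1 fg gf).
have HgMU := HgM; rewrite HMe renMU in HgMU; have [Hgc Hgc1] := PmarkU HgMU.
set K0 := maxO O (causes (renM g c)).
set e := fresh (evs O).
exists O, (renM g M), K0, e, (delta O K0 e a),
  ([fset (causes (renM g c) `|` [fset (e, a)], s) | s in m] `|` renM g c1).
split.
  exists t, (renM g c), (renM g c1), m; split => //.
  split; first by rewrite HMe renMU.
  split; first by move=> s; rewrite places_renM.
  split => //; split => //; split; first exact: Hfresh.
  by split.
have Hc := (PmarkU (eq_ind _ (fun X => Pmarking O X) HM _ HMe)).1.
have Hc1 := (PmarkU (eq_ind _ (fun X => Pmarking O X) HM _ HMe)).2.
split; first by rewrite Hab.
split; first by rewrite /f (renM_inv HM fg).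
split.
  rewrite HK /K0 -(iso_maxO HO HO m1 m2 gf fg); [|exact: Pmark_causes_sub|exact: causes_dc].
  by rewrite -causes_renM (renM_inv Hc fg).
split; first exact: HO2.
rewrite HM2 (renM_step _ _ _ _ _ (Hfresh _) HgMU).
by rewrite (renM_inv Hc fg) (renM_inv Hc1 fg).
Qed.

Section TauHat.
Variables (P Q : poset E Act) (tau : E -> E) (K0 : {fset E * Act}) (eP eQ : E) (a : Act).
Hypotheses (HP : is_poset P) (HQ : is_poset Q) (Ht : order_embedding P Q tau)
  (sK0 : K0 `<=` pev P) (HeP : eP \notin evs P) (HeQ : eQ \notin evs Q).

Definition tauhat x := if x == eP then eQ else tau x.

Lemma tauhat_old x : x \in evs P -> tauhat x = tau x.
Proof using S T HeP. by move=> xP; rewrite /tauhat; case: eqP => // e; move: HeP; rewrite -e xP. Qed.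
Lemma tauhat_new : tauhat eP = eQ.
Proof using S T. by rewrite /tauhat eqxx. Qed.

Lemma tauP x : x \in evs P -> tau x \in evs Q.
Proof. move=> xP; exact: (emb_evs HP HQ Ht xP). Qed.
Lemma tau_ne x : x \in evs P -> tau x <> eQ.
Proof. by move=> /tauP xQ e; move: HeQ; rewrite -e xQ. Qed.

Lemma tauhat_emb : order_embedding (delta P K0 eP a) (delta Q (renK tau K0) eQ a) tauhat.
Proof.
split; first split.
- move=> p; rewrite !in_pev_delta => /orP [pP|/eqP ->]; last by rewrite /= tauhat_new eqxx orbT.
  by rewrite tauhat_old ?(emb_pev HP HQ Ht) //; apply: pev_evs.
- move=> x y /in_pord_delta [H|[[ye [z zd zx]]|[xe ye]]].
  + rewrite !tauhat_old; try (by [exact: (ord1 HP H)|exact: (ord2 HP H)]).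
    by apply/in_pord_delta; left; apply: (emb_ord HP HQ Ht).
  + have zP : z \in pev P by move/fsubsetP: (down_sub P K0); apply.
    subst x y; rewrite tauhat_new tauhat_old; last exact: pev_evs.
    apply/in_pord_delta; right; left; split => //; exists (tau z.1, z.2) => //.
    by rewrite (down_emb HP HQ Ht).
  + by subst x y; rewrite tauhat_new; apply/in_pord_delta; right; right.
move=> x y /evs_delta [xP|xe] /evs_delta [yP|ye];
  rewrite ?xe ?ye ?tauhat_new ?tauhat_old //.
- move/in_pord_delta => [H|[[ye _]|[xe _]]].
  + by apply/in_pord_delta; left; apply: (emb_refl HP HQ Ht).
  + by case: (tau_ne yP ye).
  + by case: (tau_ne xP xe).
- move/in_pord_delta => [H|[[_ [z zd zx]]|[xe _]]].
  + by move: HeQ; rewrite (ord2 HQ H).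
  + case/evsP: xP => b xb; apply/in_pord_delta; right; left; split => //; exists (x, b) => //.
    have zQ : z \in pev Q by move/fsubsetP: (down_sub Q (renK tau K0)); apply.
    have ez : z = (tau x, b) by apply: (pair_uniq HQ zQ (emb_pev HP HQ Ht xb)).
    by rewrite -(down_emb HP HQ Ht) // -ez.
  + by case: (tau_ne xP xe).
- move/in_pord_delta => [H|[[ye _]|[_ ye]]].
  + by move: HeQ; rewrite (ord1 HQ H).
  + by case: (tau_ne yP ye).
  + by case: (tau_ne yP ye).
- by move=> _; apply/in_pord_delta; right; right.
Qed.
End TauHat.

Lemma fwd_K0 P Q tau (c : marking E Act S) : is_poset P -> is_poset Q -> order_embedding P Q tau ->
  Pmarking P c -> maxO Q (causes (downM Q (renM tau c))) = renK tau (maxO P (causes c)).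
Proof.
move=> HP HQ Ht Hc; rewrite causes_downM causes_renM (maxO_emb HP HQ Ht) //.
exact: Pmark_causes_sub.
Qed.

Lemma downM_renM Q tau (X : marking E Act S) :
  downM Q (renM tau X) = [fset (down Q (renK tau p.1), p.2) | p in X].
Proof. by rewrite /downM /renM -imfset_comp. Qed.

Lemma split_marking Q tau (e cQ c1Q : marking E Act S) :
  downM Q (renM tau e) = cQ `|` c1Q -> exists c c1,
  [/\ e = c `|` c1, cQ = downM Q (renM tau c) & c1Q = downM Q (renM tau c1)].
Proof.
rewrite downM_renM => He.
set phi := fun p : {fset E * Act} * S => (down Q (renK tau p.1), p.2).
exists [fset p in e | phi p \in cQ], [fset p in e | phi p \in c1Q]; split.
- apply/fsetP => p; rewrite in_fsetU !inE; apply/idP/idP => [pe|/orP [/andP [pe _]|/andP [pe _]] //].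
  have : phi p \in cQ `|` c1Q by rewrite -He; apply: in_imfset.
  by rewrite in_fsetU pe.
- rewrite downM_renM; apply/fsetP => q; apply/idP/idP.
    move=> qc; have : q \in cQ `|` c1Q by rewrite in_fsetU qc.
    rewrite -He => /imfsetP [p pe qp]; apply/imfsetP; exists p => //.
    by rewrite !inE pe /phi /= -qp qc.
  by case/imfsetP => p; rewrite !inE => /andP [_ pc] ->.
- rewrite downM_renM; apply/fsetP => q; apply/idP/idP.
    move=> qc; have : q \in cQ `|` c1Q by rewrite in_fsetU qc orbT.
    rewrite -He => /imfsetP [p pe qp]; apply/imfsetP; exists p => //.
    by rewrite !inE pe /phi /= -qp qc.
  by case/imfsetP => p; rewrite !inE => /andP [_ pc] ->.
Qed.

Lemma Pmarking_downM P Q tau (e : marking E Act S) : is_poset P -> is_poset Q ->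
  order_embedding P Q tau -> Pmarking P e -> Pmarking Q (downM Q (renM tau e)).
Proof.
move=> HP HQ Ht He; apply/(PmarkingE HQ) => q /in_downMP [p _ ->] /=.
exact: down_down.
Qed.

Section Fwd.
Variables (P Q : poset E Act) (tau : E -> E) (K0 : {fset E * Act}) (a : Act) (gP : E -> E).
Hypotheses (HP : is_poset P) (HQ : is_poset Q) (Ht : order_embedding P Q tau)
  (sK0 : K0 `<=` pev P)
  (Hg1 : morphism (dA P K0 a) (dE P K0 a) gP)
  (Hg2 : forall x, x \in evs (dE P K0 a) -> gP (oA P K0 a x) = x)
  (Hg3 : forall y, y \in evs (dA P K0 a) -> oA P K0 a (gP y) = y).

Local Notation KQ := (renK tau K0).
Local Notation eP := (fresh (evs P)).
Local Notation eQ := (fresh (evs Q)).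
Local Notation th := (tauhat tau eP eQ).

Definition tau' y := oA Q KQ a (th (gP y)).

Lemma tau'_emb : order_embedding (dA P K0 a) (dA Q KQ a) tau'.
Proof.
have HdP := dE_poset K0 a HP; have HdQ := dE_poset KQ a HQ.
have [HRP [g' [mP _ _ _]]] := rep_iso HdP.
have [HRQ [gQ [mQ mQ' gfQ fgQ]]] := rep_iso HdQ.
have e1 := iso_emb' HdP HRP mP Hg1 Hg2 Hg3.
have e2 : order_embedding (dE P K0 a) (dE Q KQ a) th.
  by apply: tauhat_emb => //; apply: Hfresh.
have e3 := iso_emb HdQ HRQ mQ mQ' gfQ fgQ.
exact: (emb_comp (emb_comp e1 e2) e3).
Qed.

Lemma tau'_old x : x \in evs (dE P K0 a) -> tau' (oA P K0 a x) = oA Q KQ a (th x).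
Proof. by move=> xd; rewrite /tau' Hg2. Qed.

Lemma fwd_K c : Pmarking P c -> K0 = maxO P (causes c) ->
  maxO Q (causes (downM Q (renM tau c))) = KQ.
Proof.
move=> Hc ->; rewrite causes_downM causes_renM (maxO_emb HP HQ Ht) //.
exact: Pmark_causes_sub.
Qed.

Lemma fwd_down X : X `<=` pev (dE P K0 a) ->
  down (dA Q KQ a) (renK tau' (renK (oA P K0 a) X)) = renK (oA Q KQ a) (down (dE Q KQ a) (renK th X)).
Proof.
move=> sX; have HdQ := dE_poset KQ a HQ; have HdP := dE_poset K0 a HP.
have [HRQ [gQ [mQ mQ' gfQ fgQ]]] := rep_iso HdQ.
rewrite renK_comp.
rewrite (@eq_in_renK (tau' \o oA P K0 a) (oA Q KQ a \o th)); last first.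
  by move=> p pX /=; rewrite tau'_old //; apply: pev_evs; move/fsubsetP: sX; apply.
rewrite -(renK_comp (oA Q KQ a) th X); apply: (iso_down HdQ HRQ mQ mQ' gfQ fgQ).
apply: (renK_emb_sub HdP HdQ) => //; apply: tauhat_emb => //; apply: Hfresh.
Qed.

Lemma th_renK (C : {fset E * Act}) : C `<=` pev P -> renK th C = renK tau C.
Proof.
move/fsubsetP => sC; apply: eq_in_renK => p pC.
by rewrite (@tauhat_old P tau eP eQ (Hfresh _)) //; apply: pev_evs; apply: sC.
Qed.

Lemma fwd_target c c1 (m : {fset S}) : Pmarking P c -> Pmarking P c1 -> K0 = maxO P (causes c) ->
  [fset (renK (oA Q KQ a) (causes (downM Q (renM tau c))) `|` [fset (nA Q KQ a, a)], s) | s in m]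
    `|` renM (oA Q KQ a) (downM Q (renM tau c1))
  = downM (dA Q KQ a) (renM tau' ([fset (renK (oA P K0 a) (causes c) `|` [fset (nA P K0 a, a)], s) | s in m]
      `|` renM (oA P K0 a) c1)).
Proof.
move=> Hc Hc1 HK; rewrite causes_downM causes_renM.
have sC := Pmark_causes_sub Hc.
have sCd : causes c `<=` pev (dE P K0 a) by apply: fsubset_trans sC (pev_delta_sub _ _ _ _).
rewrite renMU downMU; congr (_ `|` _).
  rewrite /downM /renM -!imfset_comp; apply: eq_imfset => // s' /=; congr (_, _).
  have -> : renK (oA P K0 a) (causes c) `|` [fset (nA P K0 a, a)]
          = renK (oA P K0 a) (causes c `|` [fset (eP, a)]) by rewrite renKU renK1.
  rewrite fwd_down; last first.
    rewrite fsubUset sCd /= fsub1set; apply/fsetUP; right; exact: fset11.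
  rewrite renKU renK1 /= tauhat_new th_renK //.
  rewrite downU (down_delta_old KQ a HQ (Hfresh (evs Q))); last by apply: (renK_emb_sub HP HQ Ht).
  rewrite (down_delta_new KQ a HQ (Hfresh (evs Q))).
  have sub : down Q KQ `<=` down Q (renK tau (causes c)).
    by apply: down_mono; apply: renK_mono; rewrite HK; apply: maxO_sub.
  by rewrite fsetUA (fsetUidPl _ _ sub) renKU renK1.
rewrite /downM /renM -!imfset_comp; apply: eq_in_imfset => p pc /=; congr (_, _).
have sp : p.1 `<=` pev P by apply/fsubsetP => q; apply: Pmark_tok Hc1 pc.
rewrite fwd_down; last by apply: fsubset_trans sp (pev_delta_sub _ _ _ _).
by rewrite th_renK // (down_delta_old KQ a HQ (Hfresh (evs Q))) //; apply: (renK_emb_sub HP HQ Ht).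
Qed.

Lemma fwd_step (e e' : marking E Act S) P2 :
  Pmarking P e -> stepN P e K0 a P2 e' ->
  P2 = dA P K0 a /\
  stepN Q (downM Q (renM tau e)) KQ a (dA Q KQ a) (downM (dA Q KQ a) (renM tau' e')).
Proof.
move=> He [t [c [c1 [m [[HMe Hpl Hm Ha HK] [HO2 HM2]]]]]]; split => //.
have [Hc Hc1] := PmarkU (eq_ind _ (fun X => Pmarking P X) He _ HMe).
exists t, (downM Q (renM tau c)), (downM Q (renM tau c1)), m; split; first split => //.
- by rewrite HMe renMU downMU.
- by move=> s; rewrite places_downM places_renM.
- by rewrite (fwd_K0 HP HQ Ht Hc) HK.
split => //; rewrite HM2; symmetry; exact: (fwd_target m Hc Hc1 HK).
Qed.

End Fwd.

Local Notation sim := (simAC Fin Fout l rep alpha fresh).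
Local Notation stAC := (stepAC Fin Fout l rep alpha fresh).

Lemma simAC_facts O c1 c2 : sim O c1 c2 -> [/\ rep O = O, is_poset O, Pmarking O c1 & Pmarking O c2].
Proof. by case=> R [HR /HR [Hab [_ [_ [H1 [H2 _]]]]]]; split => //; case: H1. Qed.

Lemma simAC_sym O c1 c2 : sim O c1 c2 -> sim O c2 c1.
Proof.
case=> R [HR HO]; exists (fun (O0 : poset E Act) (X Y : poset E Act * marking E Act S) => R O0 Y X); split => //.
move=> O' X Y /HR [Hab [h1 [h2 [m1 [m2 [s1 s2]]]]]].
refine (conj Hab (conj h2 (conj h1 (conj m2 (conj m1 (conj _ _)))))).
  by move=> K a O2 c1' /s2 [c2' [st r]]; exists c2'.
by move=> K a O2 c2' /s1 [c1' [st r]]; exists c1'.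
Qed.

Lemma simAC_step O c1 c2 K a O' c1' : sim O c1 c2 -> stAC O c1 K a O' c1' ->
  exists c2', stAC O c2 K a O' c2' /\ sim O' c1' c2'.
Proof.
case=> R [HR HO] st; have [_ [_ [_ [_ [_ [s1 _]]]]]] := HR _ _ _ HO.
by case: (s1 _ _ _ _ st) => c2' [st2 r]; exists c2'; split => //; exists R.
Qed.

Lemma gP_exists P K0 a : is_poset P -> exists gP,
  [/\ morphism (dA P K0 a) (dE P K0 a) gP,
      (forall x, x \in evs (dE P K0 a) -> gP (oA P K0 a x) = x) &
      (forall y, y \in evs (dA P K0 a) -> oA P K0 a (gP y) = y)].
Proof.
move=> HP; have [_ [g [m1 m2 gf fg]]] := rep_iso (dE_poset K0 a HP).
by exists g.
Qed.

Lemma stepN_Pmarking O e K0 a O2 e' : is_poset O -> Pmarking O e -> stepN O e K0 a O2 e' -> Pmarking O2 e'.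
Proof.
move=> HO He [t [c [c1 [m [[HMe Hpl Hm Ha HK] [HO2 HM2]]]]]].
have [Hc Hc1] := PmarkU (eq_ind _ (fun X => Pmarking O X) He _ HMe).
set eO := fresh (evs O).
have HdO := dE_poset K0 a HO.
have [HR [g [m1 m2 gf fg]]] := rep_iso HdO.
have HX : Pmarking (dE O K0 a) ([fset (causes c `|` [fset (eO, a)], s) | s in m] `|` c1).
  apply/(PmarkingE HdO) => p /fsetUP [/imfsetP [s' _ ->]|pc1] /=.
    rewrite downU (down_delta_old K0 a HO (Hfresh (evs O))); last exact: Pmark_causes_sub.
    rewrite (down_delta_new K0 a HO (Hfresh (evs O))) (down_causes HO Hc).
    have sub : down O K0 `<=` causes c.
      rewrite -(down_causes HO Hc); apply: down_mono; rewrite HK; exact: maxO_sub.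
    by rewrite fsetUA (fsetUidPl _ _ sub).
  rewrite (down_delta_old K0 a HO (Hfresh (evs O))).
    by case: Hc1 => _ /(_ p pc1) [s1 d1]; apply: down_id.
  by apply/fsubsetP => q; apply: Pmark_tok Hc1 pc1.
have := iso_Pmarking HdO HR m1 m2 gf fg HX.
rewrite HO2 HM2 renMU /renM -imfset_comp; congr (Pmarking _ (_ `|` _)).
apply: eq_imfset => // s' /=; rewrite renKU renK1 //.
Qed.

Definition R1 (O : poset E Act) (P1 P2 : poset E Act * marking E Act S) : Prop :=
  [/\ P1.1 = O, P2.1 = O, rep O = O & is_poset O] /\
  exists P tau e1 e2, [/\ order_embedding P O tau, sim P e1 e2,
    P1.2 = downM O (renM tau e1) & P2.2 = downM O (renM tau e2)].

Lemma R1_sym O d1 d2 : R1 O (O, d1) (O, d2) -> R1 O (O, d2) (O, d1).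
Proof.
case=> H [P [tau [e1 [e2 [Ht Hs H1 H2]]]]]; split; first by case: H.
by exists P, tau, e2, e1; split => //; apply: simAC_sym.
Qed.

Lemma R1_step O d1 d2 K a O' d1' : R1 O (O, d1) (O, d2) -> stAC O d1 K a O' d1' ->
  exists d2', stAC O d2 K a O' d2' /\ R1 O' (O', d1') (O', d2').
Proof.
case=> [[_ _ Hab HO] [P [tau [e1 [e2 [Ht Hs /= Hd1 Hd2]]]]]] st.
have [HabP HP He1 He2] := simAC_facts Hs.
have := stepAC_N st; rewrite Hd1 => -[t [cQ [c1Q [m [[HMe Hpl Hm Ha HK] [HO' HM']]]]]].
have [c [c1 [He1e HcQ Hc1Q]]] := split_marking HMe.
have [Hc Hc1] := PmarkU (eq_ind _ (fun X => Pmarking P X) He1 _ He1e).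
set K0 := maxO P (causes c).
have sK0 : K0 `<=` pev P by apply: fsubset_trans (maxO_sub _ _) (Pmark_causes_sub Hc).
have HKe : K = renK tau K0 by rewrite HK HcQ (fwd_K0 HP HO Ht Hc).
have [gP [g1 g2 g3]] := gP_exists K0 a HP.
set e1' := [fset (renK (oA P K0 a) (causes c) `|` [fset (nA P K0 a, a)], s) | s in m]
           `|` renM (oA P K0 a) c1.
have st1 : stepN P e1 K0 a (dA P K0 a) e1'.
  exists t, c, c1, m; split => //; split => // s0.
  by rewrite -Hpl HcQ places_downM places_renM.
have [e2' [st2 Hs']] := simAC_step Hs (stepN_AC HP HabP He1 st1).
have [_ st2Q] := fwd_step HP HO Ht sK0 g1 g2 g3 He2 (stepAC_N st2).
exists (downM (dA O (renK tau K0) a) (renM (tau' P O tau K0 a gP) e2')); split.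
  rewrite Hd2 HO' HKe; exact: (stepN_AC HO Hab (Pmarking_downM HP HO Ht He2) st2Q).
have HO'e : O' = dA O (renK tau K0) a by rewrite HO' HKe.
split; first by split => //; rewrite HO'e; [apply: dA_abs | apply: dA_poset].
exists (dA P K0 a), (tau' P O tau K0 a gP), e1', e2'; split => //.
- by rewrite HO'e; apply: tau'_emb.
- by rewrite /= HM' HO'e -HKe HcQ Hc1Q HKe; apply: fwd_target.
- by rewrite HO'e.
Qed.

Definition R2 (O : poset E Act) (P1 P2 : poset E Act * marking E Act S) : Prop :=
  [/\ P1.1 = O, P2.1 = O, rep O = O & is_poset O] /\
  [/\ Pmarking O P1.2, Pmarking O P2.2 &
  exists Q tau, [/\ order_embedding O Q tau, is_poset Q &
    sim Q (downM Q (renM tau P1.2)) (downM Q (renM tau P2.2))]].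

Lemma R2_sym O e1 e2 : R2 O (O, e1) (O, e2) -> R2 O (O, e2) (O, e1).
Proof.
case=> H [H1 H2 [Q [tau [Ht HQ Hs]]]]; split; first by case: H.
by split => //; exists Q, tau; split => //; apply: simAC_sym.
Qed.

Lemma R2_step O e1 e2 K0 a O' e1' : R2 O (O, e1) (O, e2) -> stAC O e1 K0 a O' e1' ->
  exists e2', stAC O e2 K0 a O' e2' /\ R2 O' (O', e1') (O', e2').
Proof.
case=> [[_ _ Hab HO] [/= He1 He2 [Q [tau [Ht HQ Hs]]]]] st.
have [HabQ _ Hd1 Hd2] := simAC_facts Hs.
have st1 := stepAC_N st.
have He1' := stepN_Pmarking HO He1 st1.
case: st1 => t [c [c1 [m [[HMe Hpl Hm Ha HK] [HO' HM']]]]].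
have [Hc Hc1] := PmarkU (eq_ind _ (fun X => Pmarking O X) He1 _ HMe).
have sK0 : K0 `<=` pev O by rewrite HK; apply: fsubset_trans (maxO_sub _ _) (Pmark_causes_sub Hc).
have [gP [g1 g2 g3]] := gP_exists K0 a HO.
have st1 : stepN O e1 K0 a O' e1' by exists t, c, c1, m; split; first split.
have [_ st1Q] := fwd_step HO HQ Ht sK0 g1 g2 g3 He1 st1.
have [d2' [st2 Hs']] := simAC_step Hs (stepN_AC HQ HabQ Hd1 st1Q).
case: (stepAC_N st2) => t' [cQ [c1Q [m' [[HMe' Hpl' Hm' Ha' HK'] [HQ2 HM2']]]]].
have [c' [c1' [He2e HcQ Hc1Q]]] := split_marking HMe'.
have [Hc' Hc1'] := PmarkU (eq_ind _ (fun X => Pmarking O X) He2 _ He2e).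
have HK0 : K0 = maxO O (causes c').
  apply: (renK_emb_inj HO HQ Ht) => //.
    by apply: fsubset_trans (maxO_sub _ _) (Pmark_causes_sub Hc').
  by rewrite -(fwd_K0 HO HQ Ht Hc') -HcQ.
set e2' := [fset (renK (oA O K0 a) (causes c') `|` [fset (nA O K0 a, a)], s) | s in m']
           `|` renM (oA O K0 a) c1'.
have st2' : stepN O e2 K0 a O' e2'.
  exists t', c', c1', m'; split; last by split.
  split => //; first by move=> s0; rewrite -Hpl' HcQ places_downM places_renM.
exists e2'; split; first exact: stepN_AC.
have HO'e : O' = dA O K0 a by [].
split; first by split => //; rewrite HO'e; [apply: dA_abs | apply: dA_poset].
split => //; first exact: stepN_Pmarking st2'.
exists (dA Q (renK tau K0) a), (tau' O Q tau K0 a gP); split.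
- by rewrite HO'e; apply: tau'_emb.
- exact: dA_poset.
have -> : downM (dA Q (renK tau K0) a) (renM (tau' O Q tau K0 a gP) e2') = d2'.
  by rewrite HM2' HcQ Hc1Q; symmetry; apply: fwd_target.
exact: Hs'.
Qed.

Lemma R1_bisim : ACbisim Fin Fout l rep alpha fresh R1.
Proof.
move=> O [O1 d1] [O2 d2] H; have H' := H.
case: H' => [[/= e1 e2 Hab HO] [P [tau [e1' [e2' [Ht Hs Hd1 Hd2]]]]]]; subst O1 O2.
have [_ HP H1 H2] := simAC_facts Hs.
split => //; split => //; split => //.
split; first by rewrite /= Hd1; apply: (Pmarking_downM HP HO Ht).
split; first by rewrite /= Hd2; apply: (Pmarking_downM HP HO Ht).
split; first by move=> K a O' c1' st; apply: R1_step H st.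
move=> K a O' c2' st; have [c1' [st' r]] := R1_step (R1_sym H) st.
by exists c1'; split => //; apply: R1_sym.
Qed.

Lemma R2_bisim : ACbisim Fin Fout l rep alpha fresh R2.
Proof.
move=> O [O1 d1] [O2 d2] H; have H' := H.
case: H' => [[/= e1 e2 Hab HO] [H1 H2 _]]; subst O1 O2.
split => //; split => //; split => //; split => //; split => //.
split; first by move=> K a O' c1' st; apply: R2_step H st.
move=> K a O' c2' st; have [c1' [st' r]] := R2_step (R2_sym H) st.
by exists c1'; split => //; apply: R2_sym.
Qed.

End Net.

End P.

Unset Implicit Arguments.
Theorem theorem2 (E Act S T : choiceType)
  (Fin : S -> T -> Prop) (Fout : T -> S -> Prop) (l : T -> Act)
  (rep : poset E Act -> poset E Act) (alpha : poset E Act -> E -> E)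
  (fresh : {fset E} -> E) :
  (forall t : T, exists s : S, Fout t s) ->
  canonical_reps rep alpha ->
  fresh_spec fresh ->
  forall (O O' : poset E Act) (sigma : E -> E) (c c' : marking E Act S),
    is_poset O' ->
    is_abstract rep O -> is_abstract rep O' ->
    order_embedding O O' sigma ->
    Pmarking O c -> Pmarking O c' ->
    (simAC Fin Fout l rep alpha fresh O c c' <->
     simAC Fin Fout l rep alpha fresh O'
       (downM O' (renM sigma c)) (downM O' (renM sigma c'))).
Proof.
move=> _ Hrep Hfresh O O' sigma c c' HO' HabO HabO' Hs Hc Hc'.
have HO := Hc.1.
split => Hsim.
  exists (R1 Fin Fout l rep alpha fresh); split; first exact: R1_bisim.
  split; first by split.
  by exists O, sigma, c, c'; split.
exists (R2 Fin Fout l rep alpha fresh); split; first exact: R2_bisim.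
split; first by split.
by split => //; exists O', sigma; split.
Qed.
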